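(* Let $\mathcal{A}$ and $\mathcal{U}$ be Banach algebras and $\theta$ a nonzero character on $\mathcal{A}$, and regard $\mathcal{U}$ as a Banach $(\mathcal{A}\times_{\theta}\mathcal{U})$-bimodule via $(a,u)\cdot v=\theta(a)v+uv$, $v\cdot(a,u)=\theta(a)v+vu$. Then a linear map $D:\mathcal{A}\times_{\theta}\mathcal{U}\to\mathcal{U}$ is a derivation if and only if $D((a,u))=\delta_1(a)+\delta_2(u)$ where $\delta_1:\mathcal{A}\to\mathcal{U}$ and $\delta_2:\mathcal{U}\to\mathcal{U}$ are derivations satisfying \[\theta(a)\delta_2(u)=\delta_1(a)u+a\delta_2(u)=u\delta_1(a)+\delta_2(u)a\qquad(a\in\mathcal{A},u\in\mathcal{U}).\]
   Context: The Lau product $\mathcal{A}\times_{\theta}\mathcal{U}$ is $\mathcal{A}\times\mathcal{U}$ with norm $\|(a,u)\|=\|a\|+\|u\|$ and product $(a,u)(a',u')=(aa',\theta(a)u'+\theta(a')u+uu')$. The induced $\mathcal{A}$-bimodule structure on $\mathcal{U}$ is $a\cdot v=v\cdot a=\theta(a)v$ (so $a\delta_2(u)$ means $\theta(a)\delta_2(u)$), and the $\mathcal{U}$-bimodule structure is multiplication in $\mathcal{U}$. *)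

(* Defs.v *)
From HB Require Import structures.
From mathcomp Require Import all_boot all_order all_algebra.
From mathcomp Require Import all_classical all_reals topology normedtype.
Set Implicit Arguments. Unset Strict Implicit. Unset Printing Implicit Defensive.
Import Order.TTheory GRing.Theory Num.Theory.
Import numFieldNormedType.Exports.
Local Open Scope ring_scope.

Definition banach_algebra_mul (K : numFieldType) (X : completeNormedModType K)
    (mul : X -> X -> X) : Prop :=
  [/\ (forall (k : K) x y z, mul (k *: x + y) z = k *: mul x z + mul y z),
      (forall (k : K) x y z, mul z (k *: x + y) = k *: mul z x + mul z y),
      (forall x y z, mul x (mul y z) = mul (mul x y) z)
    & (forall x y, `|mul x y| <= `|x| * `|y|)].

Definition lin_map (K : numFieldType) (X Y : lmodType K) (f : X -> Y) : Prop :=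
  forall (k : K) x y, f (k *: x + y) = k *: f x + f y.

Definition character (K : numFieldType) (A : lmodType K) (mulA : A -> A -> A)
    (theta : A -> K) : Prop :=
  [/\ (forall (k : K) x y, theta (k *: x + y) = k * theta x + theta y),
      (forall x y, theta (mulA x y) = theta x * theta y)
    & exists x, theta x != 0].

Definition derivation (K : numFieldType) (X M : lmodType K)
    (mulX : X -> X -> X) (lact : X -> M -> M) (ract : M -> X -> M)
    (d : X -> M) : Prop :=
  lin_map d /\ forall x y, d (mulX x y) = lact x (d y) + ract (d x) y.

Definition lau_mul (K : numFieldType) (A U : lmodType K)
    (mulA : A -> A -> A) (mulU : U -> U -> U) (theta : A -> K)
    (x y : A * U) : A * U :=
  (mulA x.1 y.1, theta x.1 *: y.2 + theta y.1 *: x.2 + mulU x.2 y.2).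

Definition lau_norm (K : numFieldType) (A U : normedModType K) (x : A * U) : K :=
  `|x.1| + `|x.2|.

Definition lau_lact (K : numFieldType) (A U : lmodType K)
    (mulU : U -> U -> U) (theta : A -> K) (x : A * U) (v : U) : U :=
  theta x.1 *: v + mulU x.2 v.
Definition lau_ract (K : numFieldType) (A U : lmodType K)
    (mulU : U -> U -> U) (theta : A -> K) (v : U) (x : A * U) : U :=
  theta x.1 *: v + mulU v x.2.

(* U as an A-bimodule: a.v = v.a = theta(a) v *)
Definition theta_lact (K : numFieldType) (A U : lmodType K) (theta : A -> K)
    (a : A) (v : U) : U := theta a *: v.
Definition theta_ract (K : numFieldType) (A U : lmodType K) (theta : A -> K)
    (v : U) (a : A) : U := theta a *: v.

(* Main.v *)
Require Import Defs.
From HB Require Import structures.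
From mathcomp Require Import all_boot all_order all_algebra.
From mathcomp Require Import all_classical all_reals topology normedtype.
Import Order.TTheory GRing.Theory Num.Theory.
Import numFieldNormedType.Exports.
Local Open Scope ring_scope.
Set Implicit Arguments. Unset Strict Implicit.

Section Aux.
Variables (K : numFieldType) (X : completeNormedModType K) (mul : X -> X -> X).
Hypothesis hm : banach_algebra_mul mul.

Lemma bm0l z : mul 0 z = 0.
Proof. case: hm => h _ _ _. have := h (-1) 0 0 z.
by rewrite scaler0 addr0 scaleN1r addNr. Qed.
Lemma bm0r z : mul z 0 = 0.
Proof. case: hm => _ h _ _. have := h (-1) 0 0 z.
by rewrite scaler0 addr0 scaleN1r addNr. Qed.
Lemma bmDl x y z : mul (x + y) z = mul x z + mul y z.
Proof. case: hm => h _ _ _. by have := h 1 x y z; rewrite !scale1r. Qed.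
Lemma bmDr x y z : mul z (x + y) = mul z x + mul z y.
Proof. case: hm => _ h _ _. by have := h 1 x y z; rewrite !scale1r. Qed.
Lemma bmZl k x z : mul (k *: x) z = k *: mul x z.
Proof. case: hm => h _ _ _. by have := h k x 0 z; rewrite !addr0 bm0l addr0. Qed.
Lemma bmZr k x z : mul z (k *: x) = k *: mul z x.
Proof. case: hm => _ h _ _. by have := h k x 0 z; rewrite !addr0 bm0r addr0. Qed.
End Aux.

Section Lin.
Variables (K : numFieldType) (X Y : lmodType K) (f : X -> Y).
Hypothesis hf : lin_map f.
Lemma lin0 : f 0 = 0.
Proof. have := hf (-1) 0 0. by rewrite scaler0 addr0 scaleN1r addNr. Qed.
Lemma linD x y : f (x + y) = f x + f y.
Proof. by have := hf 1 x y; rewrite !scale1r. Qed.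
Lemma linZ k x : f (k *: x) = k *: f x.
Proof. by have := hf k x 0; rewrite !addr0 lin0 addr0. Qed.
End Lin.

Lemma th0 (K : numFieldType) (A : lmodType K) (mulA : A -> A -> A) theta :
  character mulA theta -> theta 0 = 0.
Proof. case=> h _ _. have := h (-1) 0 0. by rewrite scaler0 addr0 mulN1r addNr. Qed.

Lemma pairZ (K : numFieldType) (A U : lmodType K) (k : K) (a : A) (u : U) :
  k *: (a, u) = (k *: a, k *: u).
Proof. by []. Qed.
Lemma pairD (K : numFieldType) (A U : lmodType K) (a b : A) (u v : U) :
  (a, u) + (b, v) = (a + b, u + v).
Proof. by []. Qed.

Lemma shuffle6 (V : zmodType) (x1 x2 x3 x4 x5 x6 : V) :
  x1 + x2 + (x3 + x4 + (x5 + x6)) = x1 + x3 + x5 + (x2 + x4 + x6).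
Proof. rewrite -!addrA; congr (_ + _). rewrite addrCA; congr (_ + _).
rewrite !addrA [x2 + x4 + x5]addrC. by rewrite !addrA. Qed.

Theorem proposition2p19 (K : numFieldType)
  (A U : completeNormedModType K) (mulA : A -> A -> A) (mulU : U -> U -> U)
  (theta : A -> K)
  (hA : banach_algebra_mul mulA) (hU : banach_algebra_mul mulU)
  (htheta : character mulA theta)
  (D : A * U -> U) (hD : lin_map D) :
  derivation (lau_mul mulA mulU theta) (lau_lact mulU theta)
    (lau_ract mulU theta) D
  <->
  exists (d1 : A -> U) (d2 : U -> U),
    [/\ derivation mulA (theta_lact theta) (theta_ract theta) d1,
        derivation mulU mulU mulU d2,
        (forall a u, D (a, u) = d1 a + d2 u),
        (forall a u, theta a *: d2 u = mulU (d1 a) u + theta_lact theta a (d2 u))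
      & (forall a u, theta a *: d2 u = mulU u (d1 a) + theta_ract theta (d2 u) a)].
Proof.
have t0 := th0 htheta.
have Dsplit a u : D (a, u) = D (a, 0) + D (0, u).
  by rewrite -(linD hD) pairD addr0 add0r.
rewrite /derivation /lau_mul /lau_lact /lau_ract /theta_lact /theta_ract /=.
split.
- move=> [_ HD]. exists (fun a => D (a, 0)), (fun u => D (0, u)); split => //.
  + split.
    * move=> k x y /=. by rewrite -hD pairZ pairD scaler0 addr0.
    * move=> x y /=. have := HD (x, 0) (y, 0). rewrite /= !scaler0 !addr0.
      by rewrite ?(bm0l hA, bm0r hA, bm0l hU, bm0r hU, addr0, add0r, scaler0, scale0r).
  + split.
    * move=> k x y /=. by rewrite -hD pairZ pairD scaler0 addr0.
    * move=> x y /=. have := HD (0, x) (0, y). rewrite /= t0 !scale0r !add0r.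
      by rewrite ?(bm0l hA, bm0r hA, bm0l hU, bm0r hU, addr0, add0r, scaler0, scale0r).
  + move=> a u /=. have := HD (a, 0) (0, u). rewrite /= t0
      ?(bm0l hA, bm0r hA, bm0l hU, bm0r hU, addr0, add0r, scaler0, scale0r).
    have -> : ((0 : A), theta a *: u) = theta a *: (0, u) by rewrite pairZ scaler0.
    move=> H. rewrite (linZ hD) in H. by rewrite [RHS]addrC -H.
  + move=> a u /=. have := HD (0, u) (a, 0). rewrite /= t0
      ?(bm0l hA, bm0r hA, bm0l hU, bm0r hU, addr0, add0r, scaler0, scale0r).
    have -> : ((0 : A), theta a *: u) = theta a *: (0, u) by rewrite pairZ scaler0.
    move=> H. rewrite (linZ hD) in H. by rewrite -H.
- move=> [d1 [d2 [[l1 H1] [l2 H2] HDs H4 H5]]]. split => // -[a u] [b v] /=.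
  have z1 : forall a u, mulU (d1 a) u = 0.
    move=> a' u'; have := H4 a' u'.
    by move/(congr1 (fun w => w - theta a' *: d2 u')); rewrite subrr addrK.
  have z2 : forall a u, mulU u (d1 a) = 0.
    move=> a' u'; have := H5 a' u'.
    by move/(congr1 (fun w => w - theta a' *: d2 u')); rewrite subrr addrK.
  rewrite !HDs H1 !(linD l2) !(linZ l2) H2 !(bmDr hU) !(bmDl hU) z1 z2 ?add0r ?addr0.
  rewrite !scalerDr.
  exact: shuffle6.
Qed.
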